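(* Let $\Sigma$ be a finite alphabet, let $X,Y\subseteq\Sigma^{\mathbb{Z}}$ be shift spaces, and let $\mu$ be a shift-invariant ergodic Borel probability measure on $Y$. Then \[R_0(X,Y,\mu)\le\inf\left\{\nu\big(\{(\mathbf{x},\mathbf{y})\in X\times Y:\mathbf{x}_0\ne\mathbf{y}_0\}\big):\ \nu\in M_{\mathcal{E}}(X,Y,\mu)\right\}.\]
   Context: $T$ is the left shift on $\Sigma^{\mathbb{Z}}$; a shift space is a closed $T$-invariant subset. On $X\times Y$ the shift acts by $T(\mathbf{x},\mathbf{y})=(T\mathbf{x},T\mathbf{y})$. An extension of $\mu$ is a shift-invariant Borel probability measure $\nu$ on $X\times Y$ with $\nu(X\times A)=\mu(A)$ for all measurable $A\subseteq Y$; $M_{\mathcal{E}}(X,Y,\mu)$ is the set of extensions that are ergodic for the shift on $X\times Y$. $\mathscr{B}_n(X)$ is the set of length-$n$ words appearing as consecutive subwords of elements of $X$; $d$ is Hamming distance, $B_r$ the Hamming ball. For $A,C\subseteq\Sigma^n$, a probability measure $\eta$ on $\Sigma^n$ and $\varepsilon>0$: $R_\varepsilon(C,A,\eta)=\min\{r\in\mathbb{Z}_{\ge0}:\eta(A\cap\bigcup_{\overline{x}\in C}B_r(\overline{x}))\ge1-\varepsilon\}$. With $\mu_n$ the marginal of $\mu$ on coordinates $0,\dots,n-1$: $R_\varepsilon(X,Y,\mu)=\liminf_n\frac1nR_\varepsilon(\mathscr{B}_n(X),\mathscr{B}_n(Y),\mu_n)$, and $R_0(X,Y,\mu)=\lim_{\varepsilon\to0}R_\varepsilon(X,Y,\mu)$.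 *)

(* Defs.v *)
From HB Require Import structures.
From mathcomp Require Import all_boot all_order all_algebra.
From mathcomp Require Import all_classical all_reals all_analysis.
Set Implicit Arguments. Unset Strict Implicit. Unset Printing Implicit Defensive.
Import Order.TTheory GRing.Theory Num.Theory.
Local Open Scope classical_set_scope.
Local Open Scope ring_scope.

(* Finite nonempty alphabets: finite types equipped with a point
   (needed by MathComp-Analysis's measurable structures). *)
HB.structure Definition FinPointed := {T of Finite T & isPointed T}.

Definition config (S : FinPointed.type) := int -> S.

Definition left_shift (S : FinPointed.type) (x : config S) : config S := fun i => x (i + 1).

Definition shift2 (S : FinPointed.type) (p : config S * config S) : config S * config S :=
  (left_shift p.1, left_shift p.2).

(* Closedness in the product topology of discrete copies of S, unfolded:
   x lies in the closure of X iff every central window of x is realised by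
   some element of X. *)
Definition closed_config (S : FinPointed.type) (X : set (config S)) : Prop :=
  forall x : config S,
    (forall n : nat, exists2 y, X y & forall i : int, `|i| <= n%:Z -> y i = x i) ->
    X x.

(* T(X) = X  (T is a bijection, so this is  x \in X <-> T x \in X). *)
Definition shift_invariant (S : FinPointed.type) (X : set (config S)) : Prop :=
  forall x : config S, X x <-> X (left_shift x).

Definition shift_space (S : FinPointed.type) (X : set (config S)) : Prop :=
  closed_config X /\ shift_invariant X.

(* Cylinder sets; they generate the Borel sigma-algebra of the product topology. *)
Definition cylinders (S : FinPointed.type) : set (set (config S)) :=
  [set C | exists (n : nat) (z : config S),
      C = [set x | forall i : int, `|i| <= n%:Z -> x i = z i]].

Notation cylT S := (g_sigma_algebraType (@cylinders S)).

Definition invariant_measure d (T : measurableType d) (R : realType)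
    (f : T -> T) (P : probability T R) : Prop :=
  forall E : set T, measurable E -> P (f @^-1` E) = P E.

Definition ergodic_measure d (T : measurableType d) (R : realType)
    (f : T -> T) (P : probability T R) : Prop :=
  invariant_measure f P /\
  forall E : set T, measurable E -> f @^-1` E = E -> P E = 0%E \/ P E = 1%E.

(* Extensions of mu to X x Y (measures on Sigma^Z x Sigma^Z whose mass is on X x Y,
   which follows from the marginal condition with A = Y). *)
Definition extension (S : FinPointed.type) (R : realType) (X Y : set (config S))
    (mu : probability (cylT S) R) (nu : probability (cylT S * cylT S)%type R) : Prop :=
  @invariant_measure _ (cylT S * cylT S)%type R (@shift2 S) nu /\
  forall A : set (cylT S), measurable A -> A `<=` Y -> nu (X `*` A) = mu A.

Definition ergodic_extensions (S : FinPointed.type) (R : realType) (X Y : set (config S))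
    (mu : probability (cylT S) R) : set (probability (cylT S * cylT S)%type R) :=
  [set nu | extension X Y mu nu /\ @ergodic_measure _ (cylT S * cylT S)%type R (@shift2 S) nu].

Definition word (S : FinPointed.type) (n : nat) := 'I_n -> S.

Definition hamming (S : FinPointed.type) (n : nat) (u v : word S n) : nat :=
  #|[pred i : 'I_n | u i != v i]|.

Definition hball (S : FinPointed.type) (n : nat) (r : nat) (c : word S n) : set (word S n) :=
  [set w | (hamming c w <= r)%N].

Definition language (S : FinPointed.type) (X : set (config S)) (n : nat) : set (word S n) :=
  [set w | exists2 x, X x & exists k : int, forall i : 'I_n, x (k + (i : nat)%:Z) = w i].

(* R_eps(C, A, eta) = min { r in Z>=0 : eta(A cap U_{c in C} B_r(c)) >= 1 - eps },
   as an extended real (the min of a nonempty set of naturals; +oo if empty). *)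
Definition Rwords (S : FinPointed.type) (R : realType) (n : nat) (eps : R)
    (C A : set (word S n)) (eta : set (word S n) -> \bar R) : \bar R :=
  ereal_inf [set (r%:R)%:E | r in
     [set r : nat | ((1 - eps)%:E <= eta (A `&` \bigcup_(c in C) hball r c))%E]].

Definition marginal (S : FinPointed.type) (R : realType) (mu : probability (cylT S) R)
    (n : nat) : set (word S n) -> \bar R :=
  fun W => mu [set y : cylT S | W (fun i : 'I_n => y (i : nat)%:Z)].

Definition Reps (S : FinPointed.type) (R : realType) (X Y : set (config S))
    (mu : probability (cylT S) R) (eps : R) : \bar R :=
  limn_einf (fun n : nat =>
    (@Rwords S R n eps (@language S X n) (@language S Y n) (@marginal S R mu n) * ((n%:R)^-1)%:E)%E).

Definition R0 (S : FinPointed.type) (R : realType) (X Y : set (config S))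
    (mu : probability (cylT S) R) : \bar R :=
  lim (Reps X Y mu @ 0^'+).

(* Main.v *)
Require Import Defs.
From HB Require Import structures.
From mathcomp Require Import all_boot all_order all_algebra.
From mathcomp Require Import all_classical all_reals all_analysis.
From mathcomp Require Import zify lra.
Import Order.TTheory GRing.Theory Num.Theory.
Set Implicit Arguments. Unset Strict Implicit. Unset Printing Implicit Defensive.
Local Open Scope classical_set_scope.
Local Open Scope ring_scope.

Section Win.
Variable S : FinPointed.type.

Definition cyl (n : nat) (z : config S) : set (config S) :=
  [set x | forall i : int, `|i| <= n%:Z -> x i = z i].

Definition ext n (w : {ffun 'I_(n.*2).+1 -> S}) : config S :=
  fun i => w (inord (absz (i + n%:Z))).

Definition win n (x : config S) : {ffun 'I_(n.*2).+1 -> S} :=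
  [ffun k : 'I_(n.*2).+1 => x ((k : nat)%:Z - n%:Z)].

Lemma ext_win n x (i : int) : `|i| <= n%:Z -> ext (win n x) i = x i.
Proof.
move=> hi; rewrite /ext ffunE inordK.
  by congr x; move: hi; rewrite ler_norml => /andP[h1 h2]; lia.
by move: hi; rewrite ler_norml => /andP[h1 h2]; lia.
Qed.

Lemma meas_win (P : config S -> Prop) n :
  (forall x y, (forall i, `|i| <= n%:Z -> x i = y i) -> P x -> P y) ->
  measurable ([set x | P x] : set (cylT S)).
Proof.
move=> hP.
have -> : ([set x | P x] : set (cylT S)) =
   \bigcup_(w in [set w : {ffun 'I_(n.*2).+1 -> S} | P (ext w)]) cyl n (ext w).
  apply/seteqP; split => x /=.
    move=> Px; exists (win n x) => /=.
      by apply: (hP x) => // i hi; rewrite ext_win.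
    by move=> i hi; rewrite ext_win.
  case=> w /= Pw hx; apply: (hP (ext w)) => // i hi; by rewrite hx.
apply: fin_bigcup_measurable; first exact: finite_finset.
move=> w _; apply: sub_sigma_algebra; by exists n, (ext w).
Qed.

Lemma meas_win2 (P : config S -> config S -> Prop) n :
  (forall x y x' y', (forall i, `|i| <= n%:Z -> x i = x' i) ->
      (forall i, `|i| <= n%:Z -> y i = y' i) -> P x y -> P x' y') ->
  measurable ([set p | P p.1 p.2] : set (cylT S * cylT S)%type).
Proof.
move=> hP.
have -> : ([set p | P p.1 p.2] : set (cylT S * cylT S)%type) =
   \bigcup_(w in [set w : {ffun 'I_(n.*2).+1 -> S} * {ffun 'I_(n.*2).+1 -> S} |
        P (ext w.1) (ext w.2)]) (cyl n (ext w.1) `*` cyl n (ext w.2)).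
  apply/seteqP; split => -[x y] /=.
    move=> Pxy; exists (win n x, win n y) => /=.
      by apply: (hP x y) => // i hi; rewrite ext_win.
    by split => i hi; rewrite ext_win.
  case=> -[w1 w2] /= Pw [hx hy]; apply: (hP (ext w1) (ext w2)) => // i hi.
    by rewrite hx. by rewrite hy.
apply: fin_bigcup_measurable; first exact: finite_finset.
move=> w _; apply: measurableX; apply: sub_sigma_algebra.
  by exists n, (ext w.1).
by exists n, (ext w.2).
Qed.

End Win.

Section Proc.
Variables (R : realType) (S : FinPointed.type).
Variable nu : probability (cylT S * cylT S)%type R.
Local Notation T2 := (cylT S * cylT S)%type.

Definition mrr (E : set T2) : R := fine (nu E).

Lemma nu_fin (E : set T2) : measurable E -> nu E \is a fin_num.
Proof. by move=> mE; apply: fin_num_measure. Qed.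

Lemma mr_ge0 E : 0 <= mrr E.
Proof. by apply: fine_ge0. Qed.

Lemma mrE E : measurable E -> (mrr E)%:E = nu E.
Proof. by move=> mE; rewrite fineK // nu_fin. Qed.

Lemma bigsetU_seqP (I : eqType) (s : seq I) (P : pred I) (F : I -> set T2) w :
  (\big[setU/set0]_(i <- s | P i) F i) w <-> exists i, [/\ i \in s, P i & F i w].
Proof.
elim: s => [|a s IH]; first by rewrite big_nil; split => // -[i []].
rewrite big_cons; case: ifP => Pa.
  split.
    case=> [Fa|/IH [i [si Pi Fi]]]; first by exists a; rewrite inE eqxx.
    by exists i; rewrite inE si orbT.
  case=> i []; rewrite inE => /orP [/eqP ->|si] Pi Fi; first by left.
  by right; apply/IH; exists i.
split; first by move=> /IH [i [si Pi Fi]]; exists i; rewrite inE si orbT.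
case=> i []; rewrite inE => /orP [/eqP ai|si] Pi Fi; first by rewrite ai Pa in Pi.
by apply/IH; exists i.
Qed.

Lemma In_mem (I : eqType) (s : seq I) i : List.In i s -> i \in s.
Proof. elim: s => // a s IH /= [->|/IH]; first by rewrite inE eqxx. by rewrite inE => ->; rewrite orbT. Qed.

Lemma mr_bigU (I : eqType) (s : seq I) (P : pred I) (F : I -> set T2) :
  uniq s -> (forall i, measurable (F i)) ->
  (forall i j, i != j -> F i `&` F j = set0) ->
  mrr (\big[setU/set0]_(i <- s | P i) F i) = \sum_(i <- s | P i) mrr (F i).
Proof.
move=> us mF dF; elim: s us => [|a s IH] /=.
  by rewrite !big_nil /mrr measure0.
move=> /andP[as_ us]; rewrite !big_cons; case: ifP => Pa; last exact: IH.
have mU : measurable (\big[setU/set0]_(i <- s | P i) F i).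
  by apply: bigsetU_measurable => i _; exact: mF.
rewrite /mrr measureU //; last first.
  apply/seteqP; split => // w [Fa /bigsetU_seqP [i [si Pi Fi]]].
  have ai : a != i by apply/eqP => ai; rewrite ai si in as_.
  by rewrite -(dF _ _ ai); split.
rewrite fineD ?nu_fin //; congr (_ + _); exact: IH.
Qed.

End Proc.

Section Pat.
Variables (R : realType) (S : FinPointed.type).
Variable nu : probability (cylT S * cylT S)%type R.
Local Notation T2 := (cylT S * cylT S)%type.
Local Notation mr := (mrr nu).

Definition xi (j : nat) (w : T2) : bool := w.1 (j%:Z) != w.2 (j%:Z).

Definition pat L (w : T2) : {ffun 'I_L -> bool} := [ffun i : 'I_L => xi i w].

Lemma meas_xi (Q : (nat -> bool) -> Prop) k :
  (forall f g, (forall j, (j < k)%N -> f j = g j) -> Q f -> Q g) ->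
  measurable [set w : T2 | Q (fun j => xi j w)].
Proof.
move=> hQ; apply: (@meas_win2 S (fun x y => Q (fun j => x (j%:Z) != y (j%:Z))) k).
move=> x y x' y' hx hy; apply: hQ => j jk.
have hj : `|j%:Z| <= k%:Z :> int by lia.
by rewrite hx // hy.
Qed.

Definition evb L (b : {ffun 'I_L -> bool}) : set T2 := [set w | pat L w = b].

Lemma meas_pat L (Q : {ffun 'I_L -> bool} -> Prop) :
  measurable [set w : T2 | Q (pat L w)].
Proof.
apply: (@meas_xi (fun f => Q [ffun i : 'I_L => f (i : nat)]) L).
move=> f g hfg; congr Q; apply/ffunP => i; rewrite !ffunE hfg //.
Qed.

Lemma meas_evb L b : measurable (@evb L b).
Proof. exact: (@meas_pat L (fun u => u = b)). Qed.

Lemma sum_ev (A : set T2) L (Q : pred {ffun 'I_L -> bool}) : measurable A ->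
  \sum_b mr (A `&` evb b) * (Q b)%:R = mr (A `&` [set w | Q (pat L w)]).
Proof.
move=> mA.
transitivity (\sum_(b | Q b) mr (A `&` evb b)).
  by rewrite [RHS]big_mkcond; apply: eq_bigr => b _; case: (Q b); rewrite ?mulr1 ?mulr0.
rewrite -mr_bigU; last 3 first.
- exact: index_enum_uniq.
- by move=> b; apply: measurableI => //; exact: meas_evb.
- move=> b b' bb'; apply/seteqP; split => // w [[_ h1] [_ h2]].
  by move/eqP: bb'; apply; rewrite -h1 -h2.
congr mr; apply/seteqP; split => w.
  by move=> /bigsetU_seqP [b [_ Qb [Aw hb]]]; split => //=; rewrite hb.
move=> [Aw Qw]; apply/bigsetU_seqP; exists (pat L w); split => //.
Qed.

Lemma sum_comp (A : set T2) L M (G : {ffun 'I_L -> bool} -> {ffun 'I_M -> bool})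
  (F : {ffun 'I_M -> bool} -> R) : measurable A ->
  \sum_b mr (A `&` evb b) * F (G b) =
  \sum_u F u * mr (A `&` [set w | G (pat L w) == u]).
Proof.
move=> mA.
transitivity (\sum_b \sum_u mr (A `&` evb b) * (F u * (G b == u)%:R)).
  apply: eq_bigr => b _; rewrite -mulr_sumr; congr (_ * _).
  rewrite (bigD1 (G b)) //= eqxx mulr1 big1 ?addr0 // => u /negbTE.
  by rewrite eq_sym => ->; rewrite mulr0.
rewrite exchange_big; apply: eq_bigr => u _.
rewrite -(@sum_ev A L (fun b => G b == u) mA) mulr_sumr; apply: eq_bigr => b _.
by rewrite mulrCA.
Qed.

Lemma xi_shift j w : xi j (shift2 w) = xi j.+1 w.
Proof.
by rewrite /xi /shift2 /left_shift /= -addn1 PoszD.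
Qed.

Definition pfirst N (b : {ffun 'I_N.+1 -> bool}) : {ffun 'I_N -> bool} :=
  [ffun i : 'I_N => b (widen_ord (leqnSn N) i)].
Definition plast N (b : {ffun 'I_N.+1 -> bool}) : {ffun 'I_N -> bool} :=
  [ffun i : 'I_N => b (lift ord0 i)].

Lemma pat_first N w : pfirst (pat N.+1 w) = pat N w.
Proof. by apply/ffunP => i; rewrite !ffunE. Qed.

Lemma pat_last N w : plast (pat N.+1 w) = pat N (shift2 w).
Proof. by apply/ffunP => i; rewrite !ffunE xi_shift. Qed.

Hypothesis Hinv : @invariant_measure _ T2 R (@shift2 S) nu.

Lemma stat (A : set T2) N (F : {ffun 'I_N -> bool} -> R) : measurable A ->
  (@shift2 S) @^-1` A = A ->
  \sum_b mr (A `&` evb b) * F (pfirst b) = \sum_b mr (A `&` evb b) * F (plast b).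
Proof.
move=> mA iA; rewrite !sum_comp //; apply: eq_bigr => u _; congr (_ * _).
have -> : A `&` [set w | plast (pat N.+1 w) == u] =
   (@shift2 S) @^-1` (A `&` [set w | pat N w == u]).
  rewrite preimage_setI iA; congr (_ `&` _); apply/seteqP; split => w /=;
  by rewrite pat_last.
have -> : A `&` [set w | pfirst (pat N.+1 w) == u] = A `&` [set w | pat N w == u].
  by congr (_ `&` _); apply/seteqP; split => w /=; rewrite pat_first.
rewrite /mrr Hinv //; apply: measurableI => //.
exact: (@meas_pat N (fun v => v == u)).
Qed.

End Pat.

Section Garsia.
Variables (R : realType) (c : R).

Definition pget N (u : {ffun 'I_N -> bool}) (j : nat) : bool :=
  if insub j is Some i then u i else false.

Lemma getE N (u : {ffun 'I_N -> bool}) (i : 'I_N) : pget u i = u i.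
Proof. by rewrite /pget valK. Qed.

Lemma get_first N (b : {ffun 'I_N.+1 -> bool}) j : (j < N)%N -> pget (pfirst b) j = pget b j.
Proof.
move=> jN; rewrite /pget insubT /= ffunE insubT /=; first by lia.
by move=> h; apply: congr1; exact: val_inj.
Qed.

Lemma get_last N (b : {ffun 'I_N.+1 -> bool}) j : (j < N)%N -> pget (plast b) j = pget b j.+1.
Proof.
move=> jN; rewrite /pget insubT /= ffunE insubT /=; apply: congr1; exact: val_inj.
Qed.

Definition SS N (u : {ffun 'I_N -> bool}) (k : nat) : R :=
  \sum_(j < k) ((pget u j)%:R - c).

Definition kmax N (u : {ffun 'I_N -> bool}) : 'I_N.+1 :=
  [arg max_(k > (ord0 : 'I_N.+1)) SS u k]%O.

Definition MM N (u : {ffun 'I_N -> bool}) : R := SS u (kmax u).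

Lemma MM_ge N (u : {ffun 'I_N -> bool}) (k : 'I_N.+1) : SS u k <= MM u.
Proof. by rewrite /MM /kmax; case: arg_maxP => // i _ H; apply: H. Qed.

Lemma MM_ge0 N (u : {ffun 'I_N -> bool}) : 0 <= MM u.
Proof. by have := MM_ge u ord0; rewrite /SS big_ord0. Qed.

Lemma SS_first N (b : {ffun 'I_N.+1 -> bool}) k : (k < N)%N ->
  SS (pfirst b) k.+1 = ((pget b 0)%:R - c) + SS (plast b) k.
Proof.
move=> kN; rewrite /SS big_ord_recl /= get_first; last by lia.
congr (_ + _); apply: eq_bigr => j _.
rewrite /bump /= add1n get_first; last by have := ltn_ord j; lia.
by rewrite get_last //; have := ltn_ord j; lia.
Qed.

Lemma garsia_pt N (b : {ffun 'I_N.+1 -> bool}) :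
  MM (pfirst b) - MM (plast b) <= (0 < MM (pfirst b))%R%:R * ((pget b 0)%:R - c).
Proof.
have [pos|npos] := boolP (0 < MM (pfirst b)); last first.
  have -> : MM (pfirst b) = 0.
    by apply/eqP; rewrite eq_le MM_ge0 andbT leNgt.
  by rewrite mul0r sub0r oppr_le0 MM_ge0.
rewrite mul1r.
move: pos; rewrite {1 2}/MM; case: (kmax (pfirst b)) => -[|k] kN /=.
  by rewrite /SS big_ord0 ltxx.
move=> _; rewrite SS_first // -addrA gerDl subr_le0.
exact: (MM_ge (plast b) (Ordinal (ltnW kN))).
Qed.

Lemma garsia N (p : {ffun 'I_N.+1 -> bool} -> R) :
  (forall b, 0 <= p b) ->
  \sum_b p b * MM (pfirst b) = \sum_b p b * MM (plast b) ->
  0 <= \sum_b p b * ((0 < MM (pfirst b))%R%:R * ((pget b 0)%:R - c)).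
Proof.
move=> p0 st.
have h0 : \sum_b p b * (MM (pfirst b) - MM (plast b)) = 0.
  by rewrite (eq_bigr (fun b => p b * MM (pfirst b) - p b * MM (plast b)));
   [rewrite sumrB st subrr | move=> b _; rewrite mulrBr].
rewrite -[X in X <= _]h0.
apply: ler_sum => b _; apply: ler_wpM2l => //; exact: garsia_pt.
Qed.

End Garsia.

Section Erg.
Variables (R : realType) (S : FinPointed.type).
Variable nu : probability (cylT S * cylT S)%type R.
Local Notation T2 := (cylT S * cylT S)%type.
Local Notation mr := (mrr nu).
Local Notation xi := (@xi S).

Lemma mono_bound (F : nat -> set T2) (t : \bar R) : (forall i, measurable (F i)) ->
  {homo F : n m / (n <= m)%N >-> (n <= m)%O} ->
  (forall n, (nu (F n) <= t)%E) -> (nu (\bigcup_n F n) <= t)%E.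
Proof.
move=> mF nd Ft.
have h := nondecreasing_cvg_mu (mu := nu) mF (bigcupT_measurable _ mF) nd.
rewrite -(cvg_lim (@ereal_hausdorff R) h).
apply: lime_le; first exact: cvgP h.
exact: nearW.
Qed.

Lemma mr_le (A B : set T2) : measurable A -> measurable B -> A `<=` B -> mr A <= mr B.
Proof.
move=> mA mB AB; rewrite -lee_fin !mrE //; by apply: le_measure; rewrite ?inE.
Qed.

Lemma mr_le1 (A : set T2) : measurable A -> mr A <= 1.
Proof. by move=> mA; rewrite -lee_fin mrE //; exact: probability_le1. Qed.

Definition cnt k (w : T2) : nat := \sum_(j < k) (xi j w : nat).

Lemma cnt_S k w : cnt k.+1 w = (xi 0 w + cnt k (shift2 w))%N.
Proof.
rewrite /cnt big_ord_recl; congr addn; apply: eq_bigr => j _.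
by rewrite xi_shift.
Qed.

Lemma cnt0 w : cnt 0 w = 0%N.
Proof. by rewrite /cnt big_ord0. Qed.

Lemma cnt_le k w : (cnt k w <= k)%N.
Proof.
elim: k w => [|k IH] w; first by rewrite cnt0.
rewrite cnt_S; have := IH (shift2 w); case: (xi 0 w) => /=; lia.
Qed.

Lemma meas_cnt (P : nat -> Prop) n : measurable [set w : T2 | P (cnt n w)].
Proof.
apply: (@meas_xi S (fun f => P (\sum_(j < n) (f j : nat))) n).
move=> f g fg; congr P; apply: eq_bigr => j _; rewrite fg //.
Qed.


Definition Aset (c : R) : set T2 :=
  \bigcap_K \bigcup_n [set w | c * n%:R + K%:R < (cnt n w)%:R].

Lemma meas_A c : measurable (Aset c).
Proof.
apply: bigcapT_measurable => K; apply: bigcupT_measurable => n.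
exact: (meas_cnt (fun m => c * n%:R + K%:R < m%:R) n).
Qed.

Lemma A_inv c : 0 <= c -> (@shift2 S) @^-1` Aset c = Aset c.
Proof.
move=> c0; apply/seteqP; split => w /=.
- move=> h K _.
  have [n _ hn] := h (K + (Num.trunc c).+1)%N I.
  exists n.+1 => //=; rewrite cnt_S.
  have hc := truncnS_gt c.
  move: hn => /= hn; rewrite -[n.+1]addn1 -[(Num.trunc c).+1]addn1 !natrD !mulrDr !mulr1 in hn hc *.
  have x0 : 0 <= (xi 0 w)%:R :> R by [].
  lra.
- move=> h K _; have [[|m] _ hn] := h K.+1 I.
    by move: hn => /=; rewrite cnt0 mulr0 add0r ltr_nat.
  exists m => //=; move: hn => /=; rewrite cnt_S => hn.
  have : ((xi 0 w : nat) <= 1)%N by case: (xi 0 w).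
  rewrite -(ler_nat R) => hx.
  rewrite -[m.+1]addn1 -[K.+1]addn1 !natrD !mulrDr !mulr1 in hn *; lra.
Qed.

Definition Eset (c : R) N : set T2 :=
  [set w | exists2 k, (k <= N)%N & c * k%:R < (cnt k w)%:R].

Lemma meas_E c N : measurable (Eset c N).
Proof.
apply: (@meas_xi S (fun f => exists2 k, (k <= N)%N & c * k%:R < (\sum_(j < k) (f j : nat))%:R) N).
move=> f g fg [k kN hk]; exists k => //.
have -> : \sum_(j < k) (g j : nat) = \sum_(j < k) (f j : nat) => //.
by apply: eq_bigr => j _; rewrite fg //; have := ltn_ord j; lia.
Qed.

Lemma get_pat L w j : (j < L)%N -> pget (pat L w) j = xi j w.
Proof. by move=> jL; rewrite /pget insubT /= ffunE. Qed.

Lemma SS_pat (c : R) N w k : (k <= N)%N -> SS c (pat N w) k = (cnt k w)%:R - c * k%:R.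
Proof.
move=> kN; rewrite /SS sumrB sumr_const card_ord /cnt natr_sum mulr_natr.
congr (_ - _); apply: eq_bigr => j _; rewrite get_pat //.
by have := ltn_ord j; lia.
Qed.

Lemma MM_pos (c : R) N w : (0 < MM c (pat N w)) <-> Eset c N w.
Proof.
split.
  rewrite /MM; case: (kmax c (pat N w)) => k kN /=.
  rewrite SS_pat // subr_gt0 => h; by exists k.
case=> k kN hk; apply: (lt_le_trans _ (MM_ge c (pat N w) (Ordinal (kN : (k < N.+1)%N)))).
by rewrite /= SS_pat // subr_gt0.
Qed.

Definition D0 : set T2 := [set w | xi 0 w].

Lemma meas_D0 : measurable D0.
Proof. by apply: (@meas_xi S (fun f => is_true (f 0%N)) 1) => f g fg; rewrite fg. Qed.

Hypothesis Hinv : @invariant_measure _ T2 R (@shift2 S) nu.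

Lemma garsia_app (A : set T2) (c : R) N : measurable A -> (@shift2 S) @^-1` A = A ->
  c * mr (A `&` Eset c N) <= mr (A `&` Eset c N `&` D0).
Proof.
move=> mA iA.
have G := @garsia R c N (fun b => mr (A `&` evb b)) (fun b => mr_ge0 _ _)
   (@stat R S nu Hinv A N (@MM R c N) mA iA).
rewrite -subr_ge0; apply: (le_trans G) => {G}.
rewrite (eq_bigr (fun b => mr (A `&` evb b) * ((0 < MM c (pfirst b)) && pget b 0)%R%:R
   - c * (mr (A `&` evb b) * (0 < MM c (pfirst b))%R%:R))); last first.
  move=> b _; case: (0 < MM c (pfirst b)); case: (pget b 0) => /=;
  rewrite ?mulr1 ?mulr0 ?mul1r ?mul0r; lra.
rewrite sumrB -mulr_sumr (@sum_ev R S nu A N.+1 (fun b => (0 < MM c (pfirst b)) && pget b 0) mA).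
rewrite (@sum_ev R S nu A N.+1 (fun b => (0 < MM c (pfirst b))) mA).
have -> : A `&` [set w | (0 < MM c (pfirst (pat N.+1 w))) && pget (pat N.+1 w) 0] =
   A `&` Eset c N `&` D0.
  apply/seteqP; split => w /=; rewrite pat_first get_pat //.
    by move=> [Aw /andP[/MM_pos ? ?]].
  by move=> [[Aw /MM_pos ->] ?].
have -> : A `&` [set w | (0 < MM c (pfirst (pat N.+1 w)))] = A `&` Eset c N.
  apply/seteqP; split => w /=; rewrite pat_first.
    by move=> [Aw /MM_pos ?].
  by move=> [Aw /MM_pos ->].
by [].
Qed.

Hypothesis Herg : @ergodic_measure _ T2 R (@shift2 S) nu.

Lemma A_null (c : R) : mr D0 < c -> nu (Aset c) = 0%E.
Proof.
move=> hc.
have c0 : 0 < c by apply: le_lt_trans hc; exact: mr_ge0.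
have iA := A_inv (ltW c0).
have mE := meas_E c.
have bound : forall N, (nu (Aset c `&` Eset c N) <= (mr D0 / c)%:E)%E.
  move=> N; rewrite -mrE; last by apply: measurableI => //; exact: meas_A.
  rewrite lee_fin ler_pdivlMr // mulrC.
  apply: (le_trans (garsia_app c N (meas_A c) iA)).
  apply: mr_le; [|exact: meas_D0|by move=> w []].
  by apply: measurableI; [apply: measurableI => //; exact: meas_A|exact: meas_D0].
have hU : \bigcup_N (Aset c `&` Eset c N) = Aset c.
  apply/seteqP; split => w; first by move=> [N _ []].
  move=> Aw; have [n _ hn] := Aw 0%N I.
  exists n => //; split => //; exists n => //.
  by move: hn => /=; rewrite addr0.
have := mono_bound (F := fun N => Aset c `&` Eset c N) (t := (mr D0 / c)%:E).
rewrite hU => /(_ _ _ bound) h.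
have {h} h : (nu (Aset c) <= (mr D0 / c)%:E)%E.
  apply: h.
    by move=> N; apply: measurableI => //; exact: meas_A.
  move=> N M NM; apply/subsetPset => w [Aw [k kN hk]]; split => //; exists k => //.
  exact: leq_trans NM.
have [//|h1] := Herg.2 (Aset c) (meas_A c) iA.
move: h; rewrite h1 lee_fin ler_pdivlMr // mul1r => h2.
by move: hc; rewrite ltNge h2.
Qed.

Lemma count_bound (g eps : R) : 0 < g -> 0 < eps ->
  exists m, forall n, (m <= n)%N ->
   ((1 - eps)%:E <= nu [set w | ((cnt n w)%:R <= (mr D0 + g) * n%:R)%R])%E.
Proof.
move=> g0 e0.
set c := mr D0 + g / 2.
have hc : mr D0 < c by rewrite /c ltrDl divr_gt0.
have An := A_null hc.
pose G K := \bigcap_n [set w | (cnt n w)%:R <= c * n%:R + K%:R].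
have mG : forall K, measurable (G K).
  move=> K; apply: bigcapT_measurable => n.
  exact: (meas_cnt (fun m => m%:R <= c * n%:R + K%:R) n).
have [K hK] : exists K, ((1 - eps)%:E <= nu (G K))%E.
  apply: contrapT => H.
  have H' : forall K, (nu (G K) <= (1 - eps)%:E)%E.
    move=> K; rewrite leNgt; apply/negP => h; apply: H; exists K.
    exact: ltW.
  have := mono_bound (F := G) (t := (1 - eps)%:E) mG.
  have nd : {homo G : n m / (n <= m)%N >-> (n <= m)%O}.
    move=> K K' KK'; apply/subsetPset => w /= hw n _; apply: (le_trans (hw n I)).
    by rewrite lerD2l ler_nat.
  move=> /(_ nd H') hle.
  have hC : ~` Aset c `<=` \bigcup_K G K.
    move=> w nA.
    have : ~ (forall K : nat, exists n, c * n%:R + K%:R < (cnt n w)%:R).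
      move=> H2; apply: nA => K _; have [n hn] := H2 K; by exists n.
    move/existsNP => [K hK]; exists K => // n _ /=.
    rewrite leNgt; apply/negP => h; apply: hK; by exists n.
  have : (nu (~` Aset c) <= nu (\bigcup_K G K))%E.
    apply: le_measure; rewrite ?inE //.
      by apply: measurableC; exact: meas_A.
    exact: bigcupT_measurable.
  rewrite probability_setC; last exact: meas_A.
  rewrite An sube0 => h1.
  have := le_trans h1 hle; rewrite lee_fin; lra.
exists (Num.trunc (K%:R / (g / 2))).+1 => n mn.
apply: (le_trans hK); apply: le_measure; rewrite ?inE //.
  exact: (meas_cnt (fun m => m%:R <= (mr D0 + g) * n%:R) n).
move=> w /(_ n I) /= hw; apply: (le_trans hw).
have hK2 : K%:R <= g / 2 * n%:R.
  have h3 := truncnS_gt (K%:R / (g / 2)).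
  have h4 : (Num.trunc (K%:R / (g / 2))).+1%:R <= n%:R :> R by rewrite ler_nat.
  have g20 : 0 < g / 2 by rewrite divr_gt0.
  rewrite mulrC -ler_pdivrMr //; apply: ltW; exact: lt_le_trans h3 h4.
rewrite /c mulrDl; lra.
Qed.

End Erg.

Lemma closed_meas (S : FinPointed.type) (X : set (config S)) :
  closed_config X -> measurable (X : set (cylT S)).
Proof.
move=> cX.
have -> : (X : set (cylT S)) =
   \bigcap_n [set x | exists2 y, X y & forall i : int, `|i| <= n%:Z -> y i = x i].
  apply/seteqP; split => x.
    by move=> Xx n _; exists x.
  by move=> h; apply: cX => n; exact: h.
apply: bigcapT_measurable => n.
apply: (@meas_win S (fun x => exists2 y, X y & forall i : int, `|i| <= n%:Z -> y i = x i) n).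
move=> x y hxy [z Xz hz]; exists z => // i hi; rewrite hz // hxy //.
Qed.

Lemma nuI1 (R : realType) d (T : measurableType d) (P : probability T R) (A B : set T) :
  measurable A -> measurable B -> P B = 1%E -> P (A `&` B) = P A.
Proof.
move=> mA mB PB.
have hA : A = (A `&` B) `|` (A `&` ~` B).
  by rewrite -setIUr setUCr setIT.
have h0 : P (A `&` ~` B) = 0%E.
  apply/eqP; rewrite eq_le measure_ge0 andbT.
  have : (P (A `&` ~` B) <= P (~` B))%E.
    apply: le_measure; rewrite ?inE //; last exact: measurableC.
    by apply: measurableI => //; exact: measurableC.
  by rewrite probability_setC // PB subee.
rewrite [in RHS]hA measureU //.
- by rewrite -[LHS]adde0; congr (_ + _); symmetry; exact: h0.
- exact: measurableI.
- by apply: measurableI => //; exact: measurableC.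
- by rewrite setIACA setICr setI0.
Qed.

Lemma ham_cnt (S : FinPointed.type) n (x y : config S) :
  hamming (fun i : 'I_n => x (i : nat)%:Z) (fun i : 'I_n => y (i : nat)%:Z) = cnt n (x, y).
Proof.
rewrite /hamming /cnt -sum1_card big_mkcond /=; apply: eq_bigr => i _.
by rewrite /xi /= inE; case: (x _ != y _).
Qed.

Lemma liminf_ev (R : realType) (u : (\bar R)^nat) (b : \bar R) m :
  (forall n, (m <= n)%N -> (u n <= b)%E) -> (limn_einf u <= b)%E.
Proof.
move=> hu; rewrite limn_einf_lim; apply: lime_le; first exact: is_cvg_einfs.
exists m => // k /= mk; apply: le_trans (hu k mk).
by apply: ereal_inf_lbound; exists k => /=.
Qed.

Lemma limn_einf_le (R : realType) (u v : (\bar R)^nat) :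
  (forall n, (u n <= v n)%E) -> (limn_einf u <= limn_einf v)%E.
Proof.
move=> uv; rewrite !limn_einf_lim; apply: lee_lim; [exact: is_cvg_einfs|exact: is_cvg_einfs|].
apply: nearW => n; apply: le_ereal_inf_tmp => _ [k /= nk <-].
apply: le_trans (uv k); apply: ereal_inf_lbound; by exists k.
Qed.

Section Main.
Variables (R : realType) (S : FinPointed.type) (X Y : set (config S)).
Variable mu : probability (cylT S) R.
Hypotheses (hXc : closed_config X) (hYc : closed_config Y) (hmuY : mu Y = 1%E).
Variable nu : probability (cylT S * cylT S)%type R.
Hypothesis hext : extension X Y mu nu.
Local Notation T2 := (cylT S * cylT S)%type.

Lemma word_bound (eps : R) n (r : nat) :
  ((1 - eps)%:E <= nu [set w : T2 | (cnt n w <= r)%N])%E ->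
  ((1 - eps)%:E <= @marginal S R mu n (@language S Y n `&` \bigcup_(c in @language S X n) hball r c))%E.
Proof.
move=> h.
set W := (@language S Y n `&` \bigcup_(c in @language S X n) hball r c).
set Gy := [set y : cylT S | W (fun i : 'I_n => y (i : nat)%:Z)].
have mGy : measurable Gy.
  apply: (@meas_win S (fun y => W (fun i : 'I_n => y (i : nat)%:Z)) n).
  move=> x y hxy; congr W; apply: funext => i; apply: hxy.
  by have := ltn_ord i; lia.
have mX := closed_meas hXc.
have mY := closed_meas hYc.
have mC : measurable [set w : T2 | (cnt n w <= r)%N].
  exact: (@meas_cnt S (fun m => (m <= r)%N) n).
have e1 : nu (X `*` Y) = 1%E by rewrite hext.2.
have e2 := nuI1 mC (measurableX mX mY) e1.
have e3 : nu (X `*` (Gy `&` Y)) = mu (Gy `&` Y).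
  by apply: hext.2; [exact: measurableI|exact: subIsetr].
apply: (le_trans h); rewrite -e2.
apply: (@le_trans _ _ (nu (X `*` (Gy `&` Y)))).
  apply: le_measure; rewrite ?inE.
  - by apply: measurableI => //; exact: measurableX.
  - by apply: measurableX => //; exact: measurableI.
  move=> [x y] /= [hc [Xx Yy]]; split => //; split => //; split.
    by exists y => //; exists 0 => i; rewrite add0r.
  exists (fun i : 'I_n => x (i : nat)%:Z).
    by exists x => //; exists 0 => i; rewrite add0r.
  by rewrite /hball /= ham_cnt.
rewrite e3 /marginal -/Gy; apply: le_measure; rewrite ?inE //.
exact: measurableI.
Qed.

Hypothesis herg : @ergodic_measure _ T2 R (@shift2 S) nu.

Lemma Reps_le (eps : R) : 0 < eps -> (Reps X Y mu eps <= (mrr nu (@D0 S))%:E)%E.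
Proof.
move=> e0; apply/lee_addgt0Pr => g g0.
have [m hm] := count_bound hext.1 herg g0 e0.
rewrite -EFinD; apply: (@liminf_ev _ _ _ (maxn m 1)) => n mn.
have n1 : (0 < n)%N by lia.
have mn' : (m <= n)%N by lia.
set r := Num.trunc ((mrr nu (@D0 S) + g) * n%:R).
have hpos : 0 <= (mrr nu (@D0 S) + g) * n%:R.
  by apply: mulr_ge0 => //; apply: addr_ge0; [exact: mr_ge0|exact: ltW].
have hw : (@Rwords S R n eps (@language S X n) (@language S Y n) (@marginal S R mu n)
           <= (r%:R)%:E)%E.
  apply: ge_ereal_inf; exists (r%:R)%:E => //; exists r => //=.
  apply: word_bound; apply: (le_trans (hm n mn')); apply: le_measure; rewrite ?inE.
  - exact: (@meas_cnt S (fun k => k%:R <= (mrr nu (@D0 S) + g) * n%:R) n).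
  - exact: (@meas_cnt S (fun k => (k <= r)%N) n).
  by move=> w /= h; rewrite truncn_ge_nat.
have ni0 : (0 <= ((n%:R : R)^-1)%:E)%E by rewrite lee_fin invr_ge0.
apply: (le_trans (lee_wpmul2r ni0 hw)).
rewrite -EFinM lee_fin ler_pdivrMr ?ltr0n //.
by rewrite truncn_le.
Qed.

Lemma R0_le : (R0 X Y mu <= (mrr nu (@D0 S))%:E)%E.
Proof.
rewrite /R0; apply: lime_le.
  apply: nonincreasing_at_right_is_cvge; apply: nearW => x a b _ _ ab.
  rewrite /Reps; apply: limn_einf_le => n; apply: lee_wpmul2r.
    by rewrite lee_fin invr_ge0.
  apply: ereal_inf_le_tmp => _ [r hr <-]; exists r => //.
  by apply: le_trans hr; rewrite lee_fin; lra.
near=> e; apply: Reps_le; near: e; exact: nbhs_right_gt.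
Unshelve. all: by end_near.
Qed.

End Main.

Theorem proposition21 (R : realType) (S : FinPointed.type) (X Y : set (config S))
    (mu : probability (cylT S) R) :
  shift_space X -> shift_space Y ->
  mu Y = 1%E -> @ergodic_measure _ (cylT S) R (@left_shift S) mu ->
  (R0 X Y mu <=
   ereal_inf [set nu [set p : cylT S * cylT S | (p.1 (0 : int)) != (p.2 (0 : int))]
             | nu in ergodic_extensions X Y mu])%E.
Proof.
move=> [hXc _] [hYc _] hmuY _.
apply: le_ereal_inf_tmp => _ [nu [hext herg] <-].
have -> : nu [set p : cylT S * cylT S | (p.1 (0 : int)) != (p.2 (0 : int))] =
  (mrr nu (@D0 S))%:E by rewrite mrE //; exact: meas_D0.
exact: R0_le.
Qed.
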